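(* Let $t\ge2$, $\sigma\in S_t$, and let $p=\mathrm{red}(\sigma_1\cdots\sigma_{t-1})\in S_{t-1}$. Let $\vec v\in\mathbb{N}^{t}$ be the vector with $v_{\sigma_t}=1$ and $v_i=0$ for $i\ne\sigma_t$. Then $\vec v$ is a gap vector for the prefix $p$ with respect to $\{(\sigma,[t-2])\}$, and the set $\{1\}$ is reversibly deletable for $p$ with respect to $\{(\sigma,[t-2])\}$.
   Context: $\mathrm{red}(w)$ replaces the $i$-th smallest letter of a word of distinct integers by $i$. A vincular pattern $(\sigma,X)$, $\sigma\in S_\ell$, $X\subseteq[\ell-1]$, is contained in $\pi$ if there are $i_1<\dots<i_\ell$ with $\mathrm{red}(\pi_{i_1}\cdots\pi_{i_\ell})=\sigma$ and $i_{x+1}=i_x+1$ for $x\in X$; $(\sigma,[t-2])$ is the pattern $\sigma_1\cdots\sigma_{t-1}\text{-}\sigma_t$. For $p\in S_k$ and $w\in[n]^k$ with distinct letters and $\mathrm{red}(w)=p$, $S_n^B(p;w)$ is the set of $B$-avoiding $\pi\in S_n$ with $\pi_i=w_i$ ($i\le k$). The spacing vector $\vec g(n,w)\in\mathbb{N}^{k+1}$ has $i$-th component $c_i-c_{i-1}-1$, with $c_i$ the $i$-th smallest letter of $w$, $c_0=0$, $c_{k+1}=n+1$. $\vec v$ is a gap vector for $p$ w.r.t. $B$ if $S_n^B(p;w)=\emptyset$ for all $n$ and all such $w$ with $\vec g(n,w)\ge\vec v$ componentwise. $d_R$ deletes entries in positions $R$ and reduces (for words: subtract from each remaining letter the number of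 deleted letters smaller than it). $R$ is reversibly deletable for $p$ w.r.t. $B$ if for all $n$ and all such $w$ with $S_n^B(p;w)\ne\emptyset$, $d_R$ is a bijection $S_n^B(p;w)\to S_{n-|R|}^B(d_R(p);d_R(w))$. *)

(* Defs.v *)
(* Permutations and words are seq nat with letters 1..n;
   positions in the paper are 1-indexed. *)
From mathcomp Require Import all_boot.
Set Implicit Arguments. Unset Strict Implicit. Unset Printing Implicit Defensive.

Definition red (w : seq nat) : seq nat :=
  [seq (count (fun y => y < x) w).+1 | x <- w].

Definition is_perm (n : nat) (s : seq nat) : bool := perm_eq s (iota 1 n).

(* vincular pattern (sigma, X), X a list of elements of [l-1] (1-indexed) *)
Definition vpattern := (seq nat * seq nat)%type.

(* I = [i_1; ...; i_l] : 0-indexed positions in pi (i_j 0-indexed).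
   The adjacency i_{x+1} = i_x + 1 for 1-indexed x is nth I x = (nth I (x-1)).+1 *)
Definition occurrence (pi : seq nat) (P : vpattern) (I : seq nat) : bool :=
  [&& sorted ltn I, all (fun i => i < size pi) I,
      red [seq nth 0 pi i | i <- I] == P.1 &
      all (fun x => (0 < x < size I) && (nth 0 I x == (nth 0 I x.-1).+1)) P.2].

Definition contains (pi : seq nat) (P : vpattern) : Prop :=
  exists I, occurrence pi P I.

Definition avoids (B : seq vpattern) (pi : seq nat) : Prop :=
  forall P, P \in B -> ~ contains pi P.

Definition SB (n : nat) (B : seq vpattern) (w pi : seq nat) : Prop :=
  [/\ is_perm n pi, avoids B pi & take (size w) pi = w].

Definition prefix_ok (n : nat) (p w : seq nat) : bool :=
  [&& size w == size p, uniq w, all (fun x => 0 < x <= n) w & red w == p].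

Definition spacing (n : nat) (w : seq nat) : seq nat :=
  let c := 0 :: sort leq w ++ [:: n.+1] in
  [seq nth 0 c i.+1 - nth 0 c i - 1 | i <- iota 0 (size w).+1].

Definition vec_ge (g v : seq nat) : bool := all2 (fun a b => b <= a) g v.

Definition gap_vector (B : seq vpattern) (p v : seq nat) : Prop :=
  size v = (size p).+1 /\
  forall n w, prefix_ok n p w -> vec_ge (spacing n w) v ->
    forall pi, ~ SB n B w pi.

Definition dR (R : seq nat) (s : seq nat) : seq nat :=
  let del := mask [seq i \in R | i <- iota 1 (size s)] s in
  let kept := mask [seq i \notin R | i <- iota 1 (size s)] s in
  [seq x - count (fun y => y < x) del | x <- kept].

(* R (a duplicate-free list of positions, |R| = size R) is reversibly deletable *)
Definition reversibly_deletable (B : seq vpattern) (p R : seq nat) : Prop :=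
  uniq R /\
  forall n w, prefix_ok n p w -> (exists pi, SB n B w pi) ->
    [/\ (forall pi, SB n B w pi -> SB (n - size R) B (dR R w) (dR R pi)),
        (forall pi1 pi2, SB n B w pi1 -> SB n B w pi2 ->
            dR R pi1 = dR R pi2 -> pi1 = pi2) &
        (forall pi', SB (n - size R) B (dR R w) pi' ->
            exists pi, SB n B w pi /\ dR R pi = pi')].

(* Main.v *)
Require Import Defs.
From mathcomp Require Import all_boot.
From mathcomp Require Import zify.

Lemma all2_nth (r : nat -> nat -> bool) s1 s2 i :
  all2 r s1 s2 -> i < size s1 -> r (nth 0 s1 i) (nth 0 s2 i).
Proof.
elim: s1 s2 i => [|a s1 IH] [|b s2] [|i] //=; case/andP => // h1 h2 hi.
exact: IH.
Qed.

Lemma count_rcons (a : pred nat) s x : count a (rcons s x) = count a s + a x.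
Proof. by rewrite -cats1 count_cat /= addn0. Qed.

Lemma red_size u : size (red u) = size u.
Proof. by rewrite /red size_map. Qed.

Lemma red_rcons u z : red (rcons u z) =
  rcons [seq (count (fun y => y < x) u + (z < x)).+1 | x <- u]
        (count (fun y => y < z) u).+1.
Proof.
rewrite /red map_rcons count_rcons ltnn addn0; congr rcons.
by apply: eq_map => x; rewrite count_rcons.
Qed.

Lemma lt_count u z x : x \in u -> x != z ->
  (z < x) = (count (fun y => y < z) u <= count (fun y => y < x) u).
Proof.
move=> xu xz; case: (ltngtP z x) => [zx|xz'|e]; last by rewrite e eqxx in xz.
- by symmetry; apply/idP; apply: sub_count => y /= yz; lia.
- symmetry; apply/negbTE; rewrite -ltnNge.
  have h1 : count (fun y => y < x) u + count (pred1 x) u <= count (fun y => y < z) u.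
    rewrite -(count_predUI (fun y => y < x) (pred1 x)).
    have -> : count (predI (fun y => y < x) (pred1 x)) u = 0.
      by apply/eqP; rewrite -leqn0 leqNgt -has_count; apply/hasP => -[y _ /= /andP[h /eqP e]]; lia.
    rewrite addn0; apply: sub_count => y /= /orP[|/eqP]; lia.
  have h2 : 0 < count (pred1 x) u by rewrite -has_count has_pred1.
  lia.
Qed.

Lemma red_rcons_eq u1 u2 z1 z2 : red u1 = red u2 -> z1 \notin u1 -> z2 \notin u2 ->
  count (fun y => y < z1) u1 = count (fun y => y < z2) u2 ->
  red (rcons u1 z1) = red (rcons u2 z2).
Proof.
move=> hr n1 n2 hc; rewrite !red_rcons hc; congr rcons.
have hs : size u1 = size u2 by rewrite -red_size hr red_size.
apply: (@eq_from_nth _ 0); first by rewrite !size_map.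
move=> i; rewrite size_map => hi.
have hi2 : i < size u2 by rewrite -hs.
rewrite !(nth_map 0) //.
have := congr1 (fun s => nth 0 s i) hr; rewrite /red !(nth_map 0) // => -[ec].
rewrite ec; congr (_ + _).+1.
have m1 := mem_nth 0 hi; have m2 := mem_nth 0 hi2.
rewrite (@lt_count _ z1 _ m1) ?(@lt_count _ z2 _ m2) ?hc ?ec //.
- by apply/eqP => e; rewrite -e m2 in n2.
- by apply/eqP => e; rewrite -e m1 in n1.
Qed.

Lemma count_iota a n x : count (fun y => y < x) (iota a n) = minn n (x - a).
Proof.
elim: n a => [|n IH] a /=; first by rewrite min0n.
rewrite IH; case: (ltnP a x) => h /=; lia.
Qed.

Lemma count_perm t s x : is_perm t s -> 0 < x <= t.+1 ->
  count (fun y => y < x) s = x.-1.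
Proof.
move=> /permP h hx; rewrite h count_iota; lia.
Qed.

Lemma red_perm t s : is_perm t s -> red s = s.
Proof.
move=> hp; rewrite /red -[in RHS](map_id s); apply/eq_in_map => x xs.
have : x \in iota 1 t by rewrite -(perm_mem hp).
rewrite mem_iota => hx; rewrite (@count_perm t s x hp); lia.
Qed.


Lemma occ_build k (s pi : seq nat) j : 0 < k -> k <= j < size pi ->
  red (rcons (take k pi) (nth 0 pi j)) = s ->
  occurrence pi (s, iota 1 k.-1) (rcons (iota 0 k) j).
Proof.
move=> k0 /andP[kj jp] hr; rewrite /occurrence /=; apply/and4P; split.
- case: k k0 kj {hr} => // k _ kj /=; rewrite rcons_path.
  have /= -> := iota_ltn_sorted 0 k.+1.
  have -> : last 0 (iota 1 k) = k.
    case: k kj => // k _.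
    have -> : iota 1 k.+1 = iota 1 (k + 1) by rewrite addn1.
    rewrite iotaD last_cat /=; lia.
  lia.
- rewrite all_rcons jp /=; apply/allP => i; rewrite mem_iota; lia.
- by rewrite map_rcons map_nth_iota0 ?hr //; lia.
- apply/allP => x; rewrite mem_iota => hx; rewrite size_rcons size_iota.
  rewrite !nth_rcons !size_iota !nth_iota; try lia.
  have -> : x < k by lia. have -> : x.-1 < k by lia.
  apply/andP; split; first lia. apply/eqP; lia.
Qed.

Lemma occ_extract k s pi I : 0 < k -> size s = k.+1 ->
  occurrence pi (s, iota 1 k.-1) I -> nth 0 I 0 = 0 ->
  exists j, k <= j < size pi /\ red (rcons (take k pi) (nth 0 pi j)) = s.
Proof.
move=> k0 hs /and4P[so al /eqP rd /allP adj] h0; simpl in rd, adj.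
have sI : size I = k.+1 by rewrite -hs -rd red_size size_map.
have hI : forall x, x < k -> nth 0 I x = x.
  elim=> [|x IH] hx //.
  have := adj x.+1; rewrite mem_iota => /(_ ltac:(lia)) /andP[_ /eqP ->].
  by rewrite IH //; lia.
have lt := sorted_ltn_nth ltn_trans 0 so.
have kj : k <= nth 0 I k.
  have := lt k.-1 k; rewrite !inE sI hI; last lia.
  move=> /(_ ltac:(lia) ltac:(lia) ltac:(lia)); lia.
have jp : nth 0 I k < size pi.
  by move/allP: al => /(_ (nth 0 I k)); apply; apply: mem_nth; rewrite sI.
exists (nth 0 I k). split; first by apply/andP.
rewrite -rd; congr red.
have st : size (take k pi) = k by rewrite size_takel //; lia.
apply: (@eq_from_nth _ 0); first by rewrite size_rcons size_map st sI.
move=> i; rewrite size_rcons st => hi.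
rewrite (nth_map 0) ?sI // nth_rcons st.
case: (ltngtP i k) => h; first by rewrite nth_take // hI.
- lia.
- by rewrite h.
Qed.

Definition d x (s : seq nat) := [seq y - (x < y) | y <- s].

Lemma mask_in1 a n : 1 < a -> [seq i \in [:: 1] | i <- iota a n] = nseq n false.
Proof. elim: n a => [|n IH] a ha //=; rewrite IH ?inE; last lia. by case: eqP; first lia. Qed.

Lemma mask_notin1 a n : 1 < a -> [seq i \notin [:: 1] | i <- iota a n] = nseq n true.
Proof. elim: n a => [|n IH] a ha //=; rewrite IH ?inE; last lia. by case: eqP; first lia. Qed.

Lemma dR1 x s : dR [:: 1] (x :: s) = d x s.
Proof.
rewrite /dR /= mask_in1 // mask_notin1 // mask_false mask_true //=.
by apply: eq_map => y; rewrite addn0.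
Qed.

Lemma red_map_mono f u : {in u &, forall a b, (f a < f b) = (a < b)} ->
  red (map f u) = red u.
Proof.
move=> h; rewrite /red -map_comp; apply/eq_in_map => x xu /=.
by rewrite count_map; congr S; apply: eq_in_count => y yu /=; rewrite h.
Qed.

Lemma d_mono x a b : a != x -> b != x -> (a - (x < a) < b - (x < b)) = (a < b).
Proof. move=> /eqP ha /eqP hb; case: (ltnP x a); case: (ltnP x b) => /= *; lia. Qed.

Lemma occ_shift x s P I : x \notin s ->
  occurrence (d x s) P I = occurrence (x :: s) P (map S I).
Proof.
move=> xs; rewrite /occurrence sorted_map all_map size_map /=.
have -> : all (fun i => i < size (d x s)) I = all (preim S (fun i => i < (size s).+1)) I.
  by rewrite size_map; apply: eq_all => i /=.
case al: (all _ I) => //.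
have -> : all (fun x0 => (0 < x0 < size I) && (nth 0 (map S I) x0 == (nth 0 (map S I) x0.-1).+1)) P.2
        = all (fun x0 => (0 < x0 < size I) && (nth 0 I x0 == (nth 0 I x0.-1).+1)) P.2.
  apply: eq_all => y; case h: (0 < y < size I) => //=.
  by rewrite !(nth_map 0) //; lia.
have E : red [seq nth 0 (d x s) i | i <- I] = red [seq nth 0 (x :: s) i | i <- [seq i.+1 | i <- I]].
  have -> : [seq nth 0 (x :: s) i | i <- [seq i.+1 | i <- I]] = [seq nth 0 s i | i <- I].
    by rewrite -map_comp.
  have -> : [seq nth 0 (d x s) i | i <- I] = map (fun y => y - (x < y)) [seq nth 0 s i | i <- I].
    rewrite -map_comp; apply/eq_in_map => i iI /=.
    by rewrite (nth_map 0) //; move/allP: al => /(_ i iI).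
  apply: red_map_mono => a b /mapP[i iI ->] /mapP[j jI ->].
  have := allP al i iI; have := allP al j jI => /= hj hi.
  by apply: d_mono; apply/eqP => e; move: xs; rewrite -e mem_nth.
by rewrite E.
Qed.


Lemma count_sorted (c : seq nat) i y : sorted leq c -> i.+1 < size c ->
  nth 0 c i < y < nth 0 c i.+1 -> count (fun z => z < y) c = i.+1.
Proof.
elim: c i => [|x c IH] [|i] //= so hi /andP[h1 h2].
- case: c so hi h2 {IH} => [|z c] //= /andP[xz pz] _ yz.
  have al := order_path_min leq_trans pz.
  have -> : count (fun z0 => z0 < y) c = 0.
    apply/eqP; rewrite -leqn0 leqNgt -has_count; apply/hasPn => u uc /=.
    by move/allP: al => /(_ u uc); lia.
  rewrite h1; lia.
- have al := order_path_min leq_trans so.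
  have xc : x <= nth 0 c i by move/allP: al; apply; apply: mem_nth; exact: ltnW hi.
  rewrite (IH i) ?(path_sorted so) //; last by apply/andP.
  have -> : x < y by lia.
  by [].
Qed.

Lemma sorted_c n w : all (fun x => 0 < x <= n) w ->
  sorted leq (0 :: sort leq w ++ [:: n.+1]).
Proof.
move=> al /=; rewrite cat_path /= andbT; apply/andP; split.
- by have := sort_sorted leq_total w; case: (sort leq w) => //= z s ->; rewrite andbT.
- have : last 0 (sort leq w) \in 0 :: sort leq w by apply: mem_last.
  rewrite inE => /orP[/eqP -> //|]; rewrite mem_sort => /(allP al); lia.
Qed.

Lemma gap_y n (w : seq nat) m : uniq w -> all (fun x => 0 < x <= n) w -> 0 < m <= (size w).+1 ->
  0 < nth 0 (spacing n w) m.-1 ->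
  exists y, [/\ 0 < y <= n, y \notin w & count (fun z => z < y) w = m.-1].
Proof.
move=> uw al hm; rewrite /spacing (nth_map 0) ?size_iota; last lia.
rewrite nth_iota; last lia. rewrite add0n.
have -> : m.-1.+1 = m by lia.
set c := 0 :: _ => hg.
have so : sorted leq c by apply: sorted_c.
have sc : size c = (size w).+2 by rewrite /c /= size_cat size_sort /= addn1.
have cle : forall z, z \in c -> z <= n.+1.
  move=> z; rewrite /c inE mem_cat mem_sort inE => /or3P[/eqP->|/(allP al)|/eqP->]; lia.
have bn : nth 0 c m <= n.+1 by apply: cle; rewrite mem_nth // sc; lia.
exists (nth 0 c m.-1).+1; split.
- lia.
- apply/negP => yw.
  have yc : (nth 0 c m.-1).+1 \in c by rewrite /c inE mem_cat mem_sort yw orbT.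
  have hj := nth_index 0 yc; have ji := index_mem (nth 0 c m.-1).+1 c; rewrite yc in ji.
  have lq := sorted_leq_nth leq_trans leqnn 0 so.
  case: (leqP (index (nth 0 c m.-1).+1 c) m.-1) => h.
  + have := lq _ m.-1 ji ltac:(rewrite inE sc; lia) h; rewrite hj; lia.
  + have := lq m _ ltac:(rewrite inE sc; lia) ji ltac:(lia); rewrite hj; lia.
- set y := (nth 0 c m.-1).+1.
  have hy : y <= n by rewrite /y; lia.
  have E : count (fun z => z < y) c = 1 + count (fun z => z < y) w.
    rewrite /c /= count_cat /= addn0 (permP (permEl (perm_sort leq w))).
    have -> : (n.+1 < y) = false by apply/negbTE; rewrite -leqNgt; lia.
    by rewrite addn0.
  have := @count_sorted c m.-1 y so ltac:(lia).
  have -> : m.-1.+1 = m by lia.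
  move=> /(_ ltac:(rewrite /y; lia)); rewrite E; lia.
Qed.


Ltac nlia := repeat match goal with
  | |- context [@size (Equality.sort ?E) ?s] => change (@size (Equality.sort E) s) with (@size nat s)
  | H : context [@size (Equality.sort ?E) ?s] |- _ => change (@size (Equality.sort E) s) with (@size nat s) in H
  end; lia.

Lemma perm_of_subset n (s : seq nat) : uniq s -> size s = n ->
  (forall y, y \in s -> 0 < y <= n) -> is_perm n s.
Proof.
move=> us ss hs; apply: uniq_perm => //; first exact: iota_uniq.
have h1 : {subset s <= iota 1 n} by move=> y /hs; rewrite mem_iota; lia.
have h2 : size (iota 1 n) <= size s by rewrite size_iota ss.
exact: (uniq_min_size us h1 h2).2.
Qed.

Lemma perm_facts n (s : seq nat) : is_perm n s ->
  [/\ uniq s, size s = n & forall y, (y \in s) = (0 < y <= n)].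
Proof.
move=> hp; split.
- by rewrite (perm_uniq hp) iota_uniq.
- by rewrite (perm_size hp) size_iota.
- by move=> y; rewrite (perm_mem hp) mem_iota; lia.
Qed.

Definition g x y := y + (x <= y).

Lemma d_g x (s : seq nat) : d x (map (g x) s) = s.
Proof.
rewrite /d -map_comp -[RHS]map_id; apply: eq_map => y /=; rewrite /g.
case: (leqP x y) => h /=; lia.
Qed.

Lemma g_d x (s : seq nat) : x \notin s -> map (g x) (d x s) = s.
Proof.
move=> xs; rewrite /d -map_comp; apply: map_id_in => y ys /=; rewrite /g.
have : y != x by apply/eqP => e; rewrite -e ys in xs.
move/eqP => ne; case: (ltnP x y) => h /=; lia.
Qed.

Lemma perm_d n x (s : seq nat) : is_perm n (x :: s) -> is_perm n.-1 (d x s).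
Proof.
move=> /perm_facts[u sz hm]; move: u => /= /andP[xs us].
apply: perm_of_subset.
- rewrite map_inj_in_uniq // => a b ha hb.
  have : a != x by apply/eqP => e; rewrite -e ha in xs.
  have : b != x by apply/eqP => e; rewrite -e hb in xs.
  move=> /eqP nb /eqP na; case: (ltnP x a); case: (ltnP x b) => /= *; lia.
- by rewrite size_map; move: sz => /= <-.
- move=> y /mapP[z zs ->].
  have : z != x by apply/eqP => e; rewrite -e zs in xs.
  have := hm z; rewrite inE zs orbT => /esym hz.
  have := hm x; rewrite inE eqxx => /esym hx. move/eqP=> nz; case: (ltnP x z) => /= h; lia.
Qed.

Lemma perm_g n x (s : seq nat) : is_perm n.-1 s -> 0 < x <= n ->
  is_perm n (x :: map (g x) s).
Proof.
move=> /perm_facts[u sz hm] hx; apply: perm_of_subset.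
- rewrite /= map_inj_in_uniq ?u ?andbT.
  + apply/mapP => -[y ys]; rewrite /g; case: (leqP x y) => /= h; lia.
  + move=> a b _ _; rewrite /g; case: (leqP x a); case: (leqP x b) => /= *; lia.
- rewrite /= size_map sz; lia.
- move=> y; rewrite inE => /orP[/eqP -> //|/mapP[z zs ->]].
  have := hm z; rewrite zs => /esym hz; rewrite /g; case: (leqP x z) => /= h; lia.
Qed.

Lemma find_index n (pi w : seq nat) k y : is_perm n pi -> take k pi = w ->
  size w = k -> 0 < y <= n -> y \notin w ->
  exists j, k <= j < size pi /\ nth 0 pi j = y.
Proof.
move=> hp ht hs hy yw.
have yp : y \in pi by rewrite (perm_mem hp) mem_iota; lia.
exists (index y pi); rewrite nth_index // index_mem yp; split => //; rewrite andbT.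
rewrite leqNgt; apply/negP => h; move/negP: yw; apply.
by rewrite -ht -(nth_index 0 yp) -(nth_take 0 h) mem_nth // ht hs.
Qed.

Lemma notin_drop (pi : seq nat) k j : uniq pi -> k <= j < size pi ->
  nth 0 pi j \notin take k pi.
Proof.
move=> u /andP[kj jp].
have : uniq (take k pi ++ drop k pi) by rewrite cat_take_drop.
rewrite cat_uniq => /and3P[_ /hasPn H _].
apply: H; rewrite -(subnKC kj) -nth_drop mem_nth // size_drop; nlia.
Qed.

Lemma shift_back (I : seq nat) : sorted ltn I -> nth 0 I 0 != 0 ->
  I = map S (map predn I).
Proof.
case: I => [|i I] //= so hi; rewrite -map_comp; congr cons; first lia.
symmetry; apply: map_id_in => j jI /=.
have := order_path_min ltn_trans so => /allP /(_ j jI); lia.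
Qed.

Lemma pok n p w : prefix_ok n p w ->
  [/\ size w = size p, uniq w, all (fun x => 0 < x <= n) w & red w = p].
Proof. by case/and4P => /eqP ? ? ? /eqP ?. Qed.

Lemma take_size_take (s : seq nat) n : take (size (take n s)) s = take n s.
Proof. rewrite size_take; case: ltnP => h //; by rewrite take_size take_oversize. Qed.


Theorem mainTheorem6 (t : nat) (sigma : seq nat) :
  2 <= t -> is_perm t sigma ->
  let p := red (take t.-1 sigma) in
  let v := [seq nat_of_bool (i == nth 0 sigma t.-1) | i <- iota 1 t] in
  let B := [:: (sigma, iota 1 (t - 2))] in
  gap_vector B p v /\ reversibly_deletable B p [:: 1].
Proof.
case: t => [//|k] hk hp; cbv zeta.
have k0 : 0 < k by [].
rewrite [k.+1.-1]/=.
have -> : k.+1 - 2 = k.-1 by lia.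
have [us szs hms] := perm_facts _ _ hp.
set m := nth 0 sigma k.
have es : sigma = rcons (take k sigma) m.
  by rewrite -take_nth ?szs // take_oversize // szs.
have mnt : m \notin take k sigma by move: us; rewrite {1}es rcons_uniq => /andP[].
have mr : 0 < m <= k.+1 by rewrite -hms mem_nth // szs.
have cm : count (fun y => y < m) (take k sigma) = m.-1.
  have := @count_perm k.+1 sigma m hp ltac:(lia).
  by rewrite {1}es count_rcons ltnn addn0.
have hred : red (rcons (take k sigma) m) = sigma by rewrite -es (red_perm _ _ hp).
set p := red (take k sigma).
have sp : size p = k by rewrite red_size size_takel // szs.
have BAD : forall w y, red w = p -> y \notin w -> count (fun z => z < y) w = m.-1 ->
    red (rcons w y) = sigma.
  move=> w y rw yw cy; rewrite -hred; apply: red_rcons_eq => //; by rewrite cy cm.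
have av : forall pi, avoids [:: (sigma, iota 1 k.-1)] pi ->
    forall I, ~ occurrence pi (sigma, iota 1 k.-1) I.
  by move=> pi pa I oc; apply: (pa (sigma, iota 1 k.-1)); [rewrite inE | exists I].
split.
- split; first by rewrite size_map size_iota sp.
  move=> n w /pok[sw uw aw rw] hv pi [pp pa pt].
  rewrite sp in sw; rewrite sw in pt.
  have hg : 0 < nth 0 (spacing n w) m.-1.
    have := all2_nth _ _ _ m.-1 hv.
    have ss : size (spacing n w) = k.+1 by rewrite /spacing size_map size_iota sw.
    rewrite ss => /(_ ltac:(lia)).
    rewrite (nth_map 0) ?size_iota; last lia.
    rewrite nth_iota; last lia.
    have -> : 1 + m.-1 = m by lia.
    by rewrite eqxx.
  have [y [hy yw cy]] := gap_y n w m uw aw ltac:(rewrite sw; lia) hg.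
  have [j [hj ej]] := find_index _ _ _ _ _ pp pt sw hy yw.
  apply: (av pi pa (rcons (iota 0 k) j)); apply: occ_build => //.
  by rewrite ej pt; apply: BAD.
split => //.
move=> n w /pok[sw uw aw rw] [pi0 [pp0 pa0 pt0]].
rewrite sp in sw; rewrite sw in pt0.
have good : forall y, 0 < y <= n -> y \notin w -> red (rcons w y) != sigma.
  move=> y hy yw; apply/eqP => e.
  have [j [hj ej]] := find_index _ _ _ _ _ pp0 pt0 sw hy yw.
  apply: (av pi0 pa0 (rcons (iota 0 k) j)); apply: occ_build => //.
  by rewrite ej pt0.
have nohead : forall pi I, is_perm n pi -> take k pi = w ->
    occurrence pi (sigma, iota 1 k.-1) I -> nth 0 I 0 = 0 -> False.
  move=> pi I pp pt oc h0.
  have [j [hj e]] := occ_extract _ _ _ _ k0 szs oc h0.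
  have [upi _ hmpi] := perm_facts _ _ pp.
  move/eqP: e; apply/negP; rewrite pt; apply: good.
  - by rewrite -hmpi mem_nth //; case/andP: hj.
  - by rewrite -pt; apply: notin_drop.
case: w sw uw aw rw good nohead pt0 => [|x w']; first by move=> /= e; rewrite -e in k0.
move=> sw uw aw rw good nohead pt0.
move: uw => /= /andP[xw' uw']; move: aw => /= /andP[hx aw'].
have kk : k = k.-1.+1 by lia.
have dec : forall pi, take k pi = x :: w' -> exists pi', pi = x :: pi' /\ take k.-1 pi' = w'.
  move=> [|x1 pi'] //; rewrite kk /= => -[-> <-]; by exists pi'.
rewrite !dR1 subn1.
split.
- move=> pi [pp pa pt]; rewrite sw in pt.
  have [pi' [epi ew]] := dec pi pt; subst pi.
  have [upi _ _] := perm_facts _ _ pp; move: upi => /= /andP[xpi _].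
  rewrite dR1; split.
  + exact: perm_d.
  + move=> P; rewrite inE => /eqP -> [I oc]; apply: (av _ pa (map S I)).
    by rewrite -occ_shift.
  + by rewrite /d size_map -map_take -ew take_size_take.
- move=> p1 p2 [pp1 _ pt1] [pp2 _ pt2]; rewrite sw in pt1 pt2.
  have [p1' [e1 ew1]] := dec p1 pt1; have [p2' [e2 ew2]] := dec p2 pt2; subst p1 p2.
  have [u1 _ _] := perm_facts _ _ pp1; move: u1 => /= /andP[x1 _].
  have [u2 _ _] := perm_facts _ _ pp2; move: u2 => /= /andP[x2 _].
  rewrite !dR1 => e; congr cons.
  by rewrite -(g_d _ _ x1) e g_d.
- move=> pi' [pp' pa' pt'].
  have sd : size (d x w') = k.-1 by rewrite size_map; move: sw => /= <-.
  rewrite sd in pt'.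
  have ptk : take k (x :: map (g x) pi') = x :: w'.
    by rewrite kk /= -map_take pt' g_d.
  have ppi : is_perm n (x :: map (g x) pi') by apply: perm_g => //; rewrite subn1 in pp'.
  exists (x :: map (g x) pi'); split; last by rewrite dR1 d_g.
  split => //; last by rewrite sw.
  move=> P; rewrite inE => /eqP -> [I oc].
  case h0: (nth 0 I 0 == 0); first exact: (nohead _ I ppi ptk oc (eqP h0)).
  have [u _ _] := perm_facts _ _ ppi; move: u => /= /andP[xg _].
  have so : sorted ltn I by case/and4P: oc.
  rewrite (shift_back _ so) ?h0 // -occ_shift // d_g in oc.
  exact: (av _ pa' _ oc).
Qed.
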